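(* Let $q\ge2$, let $\delta$ be such that the matrix $\mathbf M$ with diagonal entries $1-(q-1)\delta$ and all off-diagonal entries $\delta$ is an ergodic stochastic matrix on $\{1,\dots,q\}$, so that $\lambda_2(\mathbf M)=1-q\delta$. If $b$ is a positive integer with $b\,|\lambda_2(\mathbf M)|\le1$, then the reconstruction problem for $T_b$ and $\mathbf M$ is not solvable.
   Context: Tree process on a rooted tree with root $\rho$: the root label is drawn from an initial distribution, and each non-root vertex $v$ with parent $v'$ receives label $j$ with probability $\mathbf M_{\sigma_{v'},j}$, independently across edges given parent labels. $T_b$ is the infinite rooted tree in which every vertex has exactly $b$ children. $L_n$ is the set of vertices at distance $n$ from $\rho$ and $\sigma_n=(\sigma_v)_{v\in L_n}$. With $\mathbf P_n^\ell$ the conditional law of $\sigma_n$ given $\sigma_\rho=\ell$ and $D_V(P,Q)=\frac12\sum|P-Q|$, the reconstruction problem is solvable if there exist $i,j$ with $\lim_n D_V(\mathbf P_n^i,\mathbf P_n^j)>0$. *)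

(* Defs.v *)
From HB Require Import structures.
From mathcomp Require Import all_boot all_order all_algebra.
From mathcomp Require Import all_classical all_reals all_analysis.
Set Implicit Arguments. Unset Strict Implicit. Unset Printing Implicit Defensive.
Import Order.TTheory GRing.Theory Num.Theory.
Import numFieldNormedType.Exports.
Local Open Scope ring_scope.

(* States are 'I_q (i.e. {0,...,q-1}, standing for {1,...,q}). *)

Definition stochastic (R : realType) (q : nat) (M : 'M[R]_q) : Prop :=
  (forall i j, 0 <= M i j) /\ (forall i, \sum_(j < q) M i j = 1).

Definition mxpow (R : realType) (q : nat) (M : 'M[R]_q) (k : nat) : 'M[R]_q :=
  iter k (fun A => A *m M) 1%:M.

(* Ergodic (irreducible and aperiodic) finite chain = some power has all
   entries positive. *)
Definition ergodic_stochastic (R : realType) (q : nat) (M : 'M[R]_q) : Prop :=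
  stochastic M /\ exists k, forall i j, 0 < mxpow M k i j.

(* Vertices of T_b at depth <= n: a vertex at depth k is the word in 'I_b
   (children chosen) of length k leading from the root rho (empty word). *)
Definition vtx (b n : nat) := {k : 'I_n.+1 & k.-tuple 'I_b}.
Definition word (b n : nat) (v : vtx b n) : seq 'I_b := val (tagged v).

Definition is_parent (b n : nat) (u v : vtx b n) : bool :=
  (size (word v) == (size (word u)).+1) &&
  (word u == take (size (word u)) (word v)).

Definition edge_weight (R : realType) (q b n : nat) (M : 'M[R]_q)
  (tau : {ffun vtx b n -> 'I_q}) : R :=
  \prod_(u : vtx b n) \prod_(v : vtx b n | is_parent u v) M (tau u) (tau v).

Definition root_is (q b n : nat) (tau : {ffun vtx b n -> 'I_q}) (l : 'I_q) : bool :=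
  [forall v : vtx b n, (size (word v) == 0%N) ==> (tau v == l)].

(* sigma : L_n -> 'I_q, with L_n indexed by n-tuples over 'I_b *)
Definition level_is (q b n : nat) (tau : {ffun vtx b n -> 'I_q})
  (sigma : {ffun n.-tuple 'I_b -> 'I_q}) : bool :=
  [forall v : vtx b n, forall t : n.-tuple 'I_b,
     (word v == val t) ==> (tau v == sigma t)].

(* P_n^l(sigma) : conditional law of sigma_n given sigma_rho = l,
   obtained by marginalising the tree process on the vertices of depth <= n. *)
Definition Pn (R : realType) (q b : nat) (M : 'M[R]_q) (n : nat) (l : 'I_q)
  (sigma : {ffun n.-tuple 'I_b -> 'I_q}) : R :=
  \sum_(tau : {ffun vtx b n -> 'I_q} | root_is tau l && level_is tau sigma)
     edge_weight M tau.

Definition DV (R : realType) (T : finType) (P Q : T -> R) : R :=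
  2^-1 * \sum_(x : T) `|P x - Q x|.

Definition reconstruction_solvable (R : realType) (q b : nat) (M : 'M[R]_q) : Prop :=
  exists i j : 'I_q,
    0 < limn (fun n : nat => DV (@Pn R q b M n i) (@Pn R q b M n j)).

(* Main.v *)
Require Import Defs.
From HB Require Import structures.
From mathcomp Require Import all_boot all_order all_algebra.
From mathcomp Require Import all_classical all_reals all_analysis.
From mathcomp Require Import ring lra.
Import Order.TTheory GRing.Theory Num.Theory.
Local Open Scope ring_scope.
Set Implicit Arguments. Unset Strict Implicit.

Lemma big_option (R : Type) (idx : R) (op : Monoid.com_law idx) (T : finType)
  (F : option T -> R) :
  \big[op/idx]_(o : option T) F o = op (F None) (\big[op/idx]_(t : T) F (Some t)).
Proof.
rewrite (bigD1 None) //=; congr (op _ _).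
rewrite (reindex_omap Some id) /=; last by case.
by apply: eq_bigl => t; rewrite eqxx.
Qed.

Lemma big_pair (R : Type) (idx : R) (op : Monoid.com_law idx) (I J : finType)
  (G : I * J -> R) :
  \big[op/idx]_(p : I * J) G p = \big[op/idx]_(i : I) \big[op/idx]_(j : J) G (i, j).
Proof. by rewrite pair_bigA; apply: eq_bigr => -[]. Qed.

Section Tree.
Variable b : nat.

Definition rootv (n : nat) : vtx b n :=
  existT (fun k : 'I_n.+1 => k.-tuple 'I_b) ord0 [tuple].

Lemma word_rootv n : word (rootv n) = [::].
Proof. by []. Qed.

Lemma size_word n (v : vtx b n) : size (word v) = tag v.
Proof. by case: v => k t; rewrite /word /= size_tuple. Qed.

Lemma size_word_le n (v : vtx b n) : (size (word v) <= n)%N.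
Proof. by rewrite size_word -ltnS ltn_ord. Qed.

Lemma word_inj n : injective (@word b n).
Proof.
move=> [k t] [k' t'] /= e.
have ek : k = k'.
  apply/val_inj; rewrite /= -(size_tuple t) -(size_tuple t'); exact: (congr1 size e).
subst k'; have -> : t = t' by apply/val_inj.
by [].
Qed.

Definition mkv n (w : seq 'I_b) : vtx b n :=
  if (size w < n.+1)%N =P true is ReflectT h then
    existT (fun k : 'I_n.+1 => k.-tuple 'I_b) (Ordinal h) (@Tuple (size w) _ w (eqxx _))
  else rootv n.

Lemma word_mkv n w : (size w <= n)%N -> word (mkv n w) = w.
Proof.
move=> hw; rewrite /mkv; case: eqP => //; by rewrite ltnS hw.
Qed.

Lemma mkv_word n (v : vtx b n) : mkv n (word v) = v.
Proof. by apply: word_inj; rewrite word_mkv // size_word_le. Qed.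

Definition phiv n (x : option ('I_b * vtx b n)) : vtx b n.+1 :=
  if x is Some (c, v) then mkv n.+1 (c :: word v) else mkv n.+1 [::].
Definition psiv n (u : vtx b n.+1) : option ('I_b * vtx b n) :=
  if word u is c :: w then Some (c, mkv n w) else None.
Arguments phiv : clear implicits.
Arguments psiv : clear implicits.
Arguments phiv : simpl never.

Lemma word_phiv_None n : word (phiv n None) = [::].
Proof. by rewrite word_mkv. Qed.
Lemma word_phiv_Some n c v : word (phiv n (Some (c, v))) = c :: word v.
Proof. by rewrite word_mkv //= ltnS size_word_le. Qed.

Lemma phiv_None n : phiv n None = rootv n.+1.
Proof. by apply: word_inj; rewrite word_phiv_None. Qed.

Lemma psivK n : cancel (psiv n) (phiv n).
Proof.
move=> u; rewrite /psiv; case E: (word u) => [|c w].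
  by apply: word_inj; rewrite word_phiv_None E.
apply: word_inj; rewrite word_phiv_Some E word_mkv //.
by have := size_word_le u; rewrite E.
Qed.

Lemma phivK n : cancel (phiv n) (psiv n).
Proof.
case=> [[c v]|]; rewrite /psiv.
  by rewrite word_phiv_Some mkv_word.
by rewrite word_phiv_None.
Qed.

Lemma is_parent_phiv n x y :
  is_parent (phiv n x) (phiv n y) =
  match x, y with
  | None, Some (c, v) => size (word v) == 0%N
  | Some (c, u), Some (c', v) => (c == c') && is_parent u v
  | _, None => false
  end.
Proof.
rewrite /is_parent; case: x => [[c u]|]; case: y => [[c' v]|];
  rewrite ?word_phiv_Some ?word_phiv_None //=.
- by rewrite eqSS eqseq_cons andbCA.
- by rewrite andbT.
Qed.


Lemma size0_rootv n (v : vtx b n) : (size (word v) == 0%N) = (v == rootv n).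
Proof.
apply/idP/eqP => [/eqP|->//]; move/size0nil => e.
by apply: word_inj; rewrite e.
Qed.

Lemma root_isE q n (tau : {ffun vtx b n -> 'I_q}) l :
  root_is tau l = (tau (rootv n) == l).
Proof.
apply/forallP/eqP => [H|H v]; first by have := H (rootv n); rewrite eqxx /= => /eqP.
by apply/implyP; rewrite size0_rootv => /eqP ->; apply/eqP.
Qed.

Lemma level_isE q n (tau : {ffun vtx b n -> 'I_q}) sigma :
  level_is tau sigma = [forall t : n.-tuple 'I_b, tau (mkv n t) == sigma t].
Proof.
rewrite /level_is. apply/forallP/forallP => [H t|H v].
  by have /forallP/(_ t) := H (mkv n t); rewrite word_mkv ?size_tuple // eqxx.
apply/forallP => t; apply/implyP => /eqP e.
have -> : v = mkv n t by rewrite -e mkv_word.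
exact: H.
Qed.

Section Weights.
Variables (R : realType) (q : nat) (M : 'M[R]_q).

Lemma edge_weightS n (tau : {ffun vtx b n.+1 -> 'I_q}) :
  edge_weight M tau = \prod_(c < b)
    (M (tau (rootv n.+1)) (tau (phiv n (Some (c, rootv n)))) *
     edge_weight M [ffun v => tau (phiv n (Some (c, v)))]).
Proof.
have bij : bijective (phiv n) by exists (psiv n); [exact: phivK | exact: psivK].
have GE x : \prod_(v | is_parent (phiv n x) v) M (tau (phiv n x)) (tau v) =
   \prod_(y : option ('I_b * vtx b n))
      (if is_parent (phiv n x) (phiv n y) then M (tau (phiv n x)) (tau (phiv n y)) else 1).
  by rewrite (reindex (phiv n) (onW_bij _ bij)) big_mkcond.
rewrite /edge_weight (reindex (phiv n) (onW_bij _ bij)) big_option big_pair.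
rewrite GE big_option big_pair /= !is_parent_phiv mul1r -big_split /=.
apply: eq_bigr => c _; congr (_ * _).
  rewrite (bigD1 (rootv n)) //= is_parent_phiv size0_rootv eqxx big1 ?mulr1 ?phiv_None //.
  by move=> v /negPf; rewrite -phiv_None is_parent_phiv size0_rootv => ->.
apply: eq_bigr => u _; rewrite GE big_option big_pair /= is_parent_phiv mul1r.
rewrite (bigD1 c) //= [X in _ * X]big1 ?mulr1; last first.
  move=> c' /negPf; rewrite eq_sym => Hc; apply: big1 => v _.
  by rewrite is_parent_phiv Hc.

rewrite [RHS]big_mkcond /=; apply: eq_bigr => v _.
by rewrite is_parent_phiv eqxx /= !ffunE.
Qed.


Definition subf n (sigma : {ffun n.+1.-tuple 'I_b -> 'I_q}) (c : 'I_b) :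
  {ffun n.-tuple 'I_b -> 'I_q} := [ffun t : n.-tuple 'I_b => sigma [tuple of c :: t]].

Definition Theta n (p : 'I_q * {ffun 'I_b -> {ffun vtx b n -> 'I_q}}) :
  {ffun vtx b n.+1 -> 'I_q} :=
  [ffun u => if psiv n u is Some (c, v) then p.2 c v else p.1].

Definition Thetainv n (tau : {ffun vtx b n.+1 -> 'I_q}) :
  'I_q * {ffun 'I_b -> {ffun vtx b n -> 'I_q}} :=
  (tau (phiv n None), [ffun c => [ffun v => tau (phiv n (Some (c, v)))]]).

Lemma Theta_bij n : bijective (@Theta n).
Proof.
exists (@Thetainv n).
  case=> r h; rewrite /Thetainv !ffunE phivK /=; congr (_, _).
  by apply/ffunP => c; rewrite ffunE; apply/ffunP => v; rewrite !ffunE phivK.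
move=> tau; apply/ffunP => u; rewrite !ffunE.
case E: (psiv n u) => [[c v]|]; rewrite /= ?ffunE -E psivK //.
Qed.

Lemma Theta_root n p : Theta p (rootv n.+1) = p.1.
Proof. by rewrite -phiv_None ffunE phivK. Qed.

Lemma Theta_Some n p c v : Theta p (phiv n (Some (c, v))) = p.2 c v.
Proof. by rewrite ffunE phivK. Qed.

Lemma mkvS n c (t : seq 'I_b) : (size t <= n)%N ->
  mkv n.+1 (c :: t) = phiv n (Some (c, mkv n t)).
Proof.
move=> ht; apply: word_inj; rewrite word_phiv_Some !word_mkv //.
Qed.

Lemma level_Theta n (p : 'I_q * {ffun 'I_b -> {ffun vtx b n -> 'I_q}}) sigma :
  level_is (Theta p) sigma = [forall c, level_is (p.2 c) (subf sigma c)].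
Proof.
rewrite level_isE; apply/forallP/forallP => [H c|H t].
  rewrite level_isE; apply/forallP => t; rewrite ffunE.
  have := H [tuple of c :: t]; rewrite /= mkvS ?size_tuple // Theta_Some //.
rewrite [t]tuple_eta /= mkvS ?size_tuple // Theta_Some.
have := H (thead t); rewrite level_isE => /forallP/(_ [tuple of behead t]).
by rewrite ffunE.
Qed.

Lemma edge_Theta n p :
  edge_weight M (Theta p) =
  \prod_(c < b) (M p.1 (p.2 c (rootv n)) * edge_weight M (p.2 c)).
Proof.
rewrite edge_weightS Theta_root; apply: eq_bigr => c _; rewrite Theta_Some.
congr (_ * edge_weight M _); apply/ffunP => v; by rewrite !ffunE phivK.
Qed.

Lemma PnS n l (sigma : {ffun n.+1.-tuple 'I_b -> 'I_q}) :
  @Pn R q b M n.+1 l sigma =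
  \prod_(c < b) \sum_(k < q) M l k * @Pn R q b M n k (subf sigma c).
Proof.
rewrite /Pn (reindex (@Theta n) (onW_bij _ (@Theta_bij n))) /=.
rewrite big_mkcond big_pair /= (bigD1 l) //= [X in _ + X]big1 ?addr0; last first.
  move=> r /negPf Hr; apply: big1 => h _.
  by rewrite root_isE Theta_root /= Hr.
under eq_bigr => h _ do rewrite root_isE Theta_root eqxx /= level_Theta edge_Theta /=.
have E : forall h : {ffun 'I_b -> {ffun vtx b n -> 'I_q}},
   (if [forall c, level_is (h c) (subf sigma c)]
    then \prod_(c < b) (M l (h c (rootv n)) * edge_weight M (h c)) else 0) =
   \prod_(c < b) (if level_is (h c) (subf sigma c)
                  then M l (h c (rootv n)) * edge_weight M (h c) else 0).
  move=> h; case: forallP => H.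
    by apply: eq_bigr => c _; rewrite H.
  have [c Hc] : exists c, ~~ level_is (h c) (subf sigma c).
    by apply/existsP; rewrite -negb_forall; apply/forallP.
  by rewrite (bigD1 c) //= (negPf Hc) mul0r.
rewrite (eq_bigr _ (fun h _ => E h)).
rewrite -(bigA_distr_bigA (fun c g => if level_is g (subf sigma c)
            then M l (g (rootv n)) * edge_weight M g else 0)).
apply: eq_bigr => c _.
under [RHS]eq_bigr => k _ do rewrite big_mkcond mulr_sumr.
rewrite exchange_big /=; apply: eq_bigr => g _.
rewrite (bigD1 (g (rootv n))) //= root_isE eqxx /= big1 ?addr0.
  by case: ifP; rewrite ?mulr0.
by move=> k; rewrite root_isE eq_sym => /negPf ->; rewrite mulr0.
Qed.


Lemma Pn_ge0 n l sigma : (forall i j, 0 <= M i j) -> 0 <= @Pn R q b M n l sigma.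
Proof.
move=> HM; apply: sumr_ge0 => tau _; apply: prodr_ge0 => u _; exact: prodr_ge0.
Qed.

Definition glue n (s : {ffun 'I_b -> {ffun n.-tuple 'I_b -> 'I_q}}) :
  {ffun n.+1.-tuple 'I_b -> 'I_q} :=
  [ffun t : n.+1.-tuple 'I_b => s (thead t) [tuple of behead t]].

Lemma subf_glue n s c : subf (@glue n s) c = s c.
Proof.
apply/ffunP => t; rewrite !ffunE /=; congr (s _ _).
  by apply/val_inj.

Qed.

Lemma glue_bij n : bijective (@glue n).
Proof.
exists (fun sigma => [ffun c => subf sigma c]).
  by move=> s; apply/ffunP => c; rewrite ffunE subf_glue.
move=> sigma; apply/ffunP => t; rewrite !ffunE [in RHS](tuple_eta t).
by [].
Qed.

Lemma sum_glue n (F : {ffun n.+1.-tuple 'I_b -> 'I_q} -> R) :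
  \sum_sigma F sigma = \sum_s F (@glue n s).
Proof. by rewrite (reindex (@glue n) (onW_bij _ (@glue_bij n))). Qed.

Lemma vtx0_root (v : vtx b 0) : v = rootv 0.
Proof. by apply/eqP; rewrite -size0_rootv -leqn0 size_word_le. Qed.

Lemma sum_Pn0 l : \sum_sigma @Pn R q b M 0 l sigma = 1.
Proof.
rewrite /Pn; under eq_bigr => s _ do rewrite big_mkcond.
rewrite exchange_big /=.
have w1 : forall tau : {ffun vtx b 0 -> 'I_q}, edge_weight M tau = 1.
  move=> tau; apply: big1 => u _; apply: big1 => v.
  by rewrite /is_parent; move: (size_word_le v) (size_word_le u); rewrite !leqn0 => /eqP -> /eqP ->.
pose lev (tau : {ffun vtx b 0 -> 'I_q}) : {ffun 0.-tuple 'I_b -> 'I_q} :=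
  [ffun t : 0.-tuple 'I_b => tau (mkv 0 t)].
have levE : forall tau sigma, level_is tau sigma = (sigma == lev tau).
  move=> tau sigma; rewrite level_isE; apply/forallP/eqP => [H|->] .
    by apply/ffunP => t; rewrite ffunE (eqP (H t)).
  by move=> t; rewrite ffunE.
rewrite (eq_bigr (fun tau : {ffun vtx b 0 -> 'I_q} => if tau (rootv 0) == l then 1 else 0)); last first.
  move=> tau _; rewrite (bigD1 (lev tau)) //= root_isE levE eqxx andbT.
  rewrite big1 ?addr0; first by rewrite w1.
  by move=> s /negPf; rewrite levE => ->; rewrite andbF.
have bij0 : bijective (fun x : 'I_q => [ffun _ : vtx b 0 => x]).
  exists (fun tau : {ffun vtx b 0 -> 'I_q} => tau (rootv 0)); first by move=> x; rewrite ffunE.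
  by move=> tau; apply/ffunP => v; rewrite !ffunE (vtx0_root v).
rewrite (reindex _ (onW_bij _ bij0)) /= (bigD1 l) //= ffunE eqxx big1 ?addr0 //.
by move=> x /negPf; rewrite ffunE => ->.
Qed.

Lemma sum_Pn n l : stochastic M -> \sum_sigma @Pn R q b M n l sigma = 1.
Proof.
move=> [HM0 HM1]; elim: n l => [|n IH] l; first exact: sum_Pn0.
rewrite sum_glue.
under eq_bigr => s _ do rewrite PnS.
under eq_bigr => s _ do under eq_bigr => c _ do rewrite subf_glue.
rewrite -(bigA_distr_bigA (fun c t => \sum_(k < q) M l k * @Pn R q b M n k t)) /=.
rewrite big1 // => c _; rewrite exchange_big /= -(HM1 l); apply: eq_bigr => k _.
by rewrite -mulr_sumr IH mulr1.
Qed.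

End Weights.
End Tree.

Lemma norm_sub_le (R : realType) (A B C : R) : C <= A -> C <= B ->
  `|A - B| <= (A - C) + (B - C).
Proof. move=> hA hB; rewrite ler_norml; apply/andP; split; lra. Qed.

Lemma tv_prod (R : realType) (T : finType) (b : nat) (mu nu : T -> R) :
  (forall x, 0 <= mu x) -> (forall x, 0 <= nu x) ->
  \sum_x mu x = 1 -> \sum_x nu x = 1 ->
  \sum_(s : {ffun 'I_b -> T}) `|\prod_(c < b) mu (s c) - \prod_(c < b) nu (s c)|
    <= 2 * (1 - (1 - DV mu nu) ^+ b).
Proof.
move=> h0 h1 s0 s1.
pose m x := 2^-1 * (mu x + nu x - `|mu x - nu x|).
have hm : forall x, 0 <= m x <= mu x /\ m x <= nu x.
  move=> x; rewrite /m; have := h0 x; have := h1 x.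
  have := ler_norm (mu x - nu x); have := ler_norm (nu x - mu x).
  rewrite distrC => ha hb hc hd; split; [apply/andP; split|]; first last.
  - lra.
  - lra.
  - suff : `|mu x - nu x| <= mu x + nu x by lra.
    by rewrite (le_trans (ler_normB _ _)) // !ger0_norm.
have sm : \sum_x m x = 1 - DV mu nu.
  rewrite /DV /m -mulr_sumr !sumrB big_split /= s0 s1; lra.
have prod_sum : forall f : T -> R, \sum_(s : {ffun 'I_b -> T}) \prod_(c < b) f (s c)
    = (\sum_x f x) ^+ b.
  move=> f; rewrite -(bigA_distr_bigA (fun (c : 'I_b) x => f x)) /=.
  by rewrite prodr_const card_ord.
apply: le_trans (_ : \sum_(s : {ffun 'I_b -> T})
   ((\prod_(c < b) mu (s c) - \prod_(c < b) m (s c)) +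
    (\prod_(c < b) nu (s c) - \prod_(c < b) m (s c))) <= _).
  apply: ler_sum => s _; apply: norm_sub_le; apply: ler_prod => c _;
  by have [/andP[? ?] ?] := hm (s c); apply/andP.
rewrite big_split /= !sumrB !prod_sum s0 s1 sm !expr1n; lra.
Qed.

Lemma sum_delta (R : realType) (q : nat) (f : 'I_q -> R) i :
  \sum_k (i == k)%:R * f k = f i.
Proof.
rewrite (bigD1 i) //= eqxx mul1r big1 ?addr0 // => k.
by rewrite eq_sym => /negPf ->; rewrite mul0r.
Qed.

Section Potts.
Variables (R : realType) (q b : nat) (delta : R) (M : 'M[R]_q).
Hypothesis HMf : forall i j : 'I_q,
  M i j = if i == j then 1 - (q%:R - 1) * delta else delta.
Hypothesis HMs : stochastic M.

Definition xs n i j := DV (@Pn R q b M n i) (@Pn R q b M n j).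

Lemma DV_rec n i j :
  xs n.+1 i j <= 1 - (1 - `|1 - q%:R * delta| * xs n i j) ^+ b.
Proof.
set lam := 1 - q%:R * delta.
pose mu l t := \sum_(k < q) M l k * @Pn R q b M n k t.
have HMd : forall k, M i k - M j k = lam * ((i == k)%:R - (j == k)%:R).
  by move=> k; rewrite !HMf /lam; case: (i == k); case: (j == k) => /=; ring.
have mudiff : forall t, mu i t - mu j t =
    lam * (@Pn R q b M n i t - @Pn R q b M n j t).
  move=> t; rewrite /mu -sumrB.
  under eq_bigr => k _ do rewrite -mulrBl HMd mulrBr mulrBl -!mulrA.
  by rewrite sumrB -!mulr_sumr !sum_delta mulrBr.
have dvmu : DV (mu i) (mu j) = `|lam| * xs n i j.
  rewrite /DV /xs /DV [RHS]mulrCA; congr (_ * _); rewrite mulr_sumr.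
  by apply: eq_bigr => t _; rewrite mudiff normrM.
have mu0 : forall l t, 0 <= mu l t.
  move=> l t; apply: sumr_ge0 => k _; apply: mulr_ge0; first exact: HMs.1.
  exact: Pn_ge0 HMs.1.
have mu1 : forall l, \sum_t mu l t = 1.
  move=> l; rewrite /mu exchange_big /= -(HMs.2 l); apply: eq_bigr => k _.
  by rewrite -mulr_sumr sum_Pn // mulr1.
have H := tv_prod b (mu0 i) (mu0 j) (mu1 i) (mu1 j).
rewrite dvmu in H.
rewrite /xs {1}/DV sum_glue.
under eq_bigr => s _ do rewrite !PnS.
under eq_bigr => s _ do under eq_bigr => c _ do rewrite subf_glue.
under eq_bigr => s _ do under [X in _ - X]eq_bigr => c _ do rewrite subf_glue.
apply: le_trans; first by apply: ler_wpM2l; last exact: H.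
rewrite /xs; set Y := (1 - _ ^+ b); lra.
Qed.

End Potts.

Lemma bern (R : realType) (u : R) (b : nat) : 0 <= u <= 1 ->
  1 - u ^+ b.+1 <= (1 - u) * (1 + b%:R * u).
Proof.
move=> /andP[u0 u1]; elim: b => [|b IH]; first by rewrite expr1 mul0r addr0 mulr1.
have hb : u ^+ b.+2 <= u.
  by rewrite exprS ler_piMr // exprn_ile1.
have hb' : u ^+ b.+2 = u ^+ b.+1 * u by rewrite exprSr.
rewrite -natr1.
have e : 1 - u ^+ b.+2 = (1 - u ^+ b.+1) + u ^+ b.+1 * (1 - u) by rewrite hb'; ring.
rewrite e.
have : u ^+ b.+1 * (1 - u) <= u * (1 - u).
  by apply: ler_wpM2r; [lra | rewrite exprS ler_piMr // exprn_ile1].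
nra.
Qed.

Lemma step_ineq (R : realType) (a x : R) (b : nat) :
  0 <= a -> a < 1 -> b.+1%:R * a <= 1 -> 0 <= x <= 1 ->
  1 - (1 - a * x) ^+ b.+1 <= x - ((1 - b.+1%:R * a) + a ^+ 2 * b%:R) * x ^+ 2.
Proof.
move=> a0 a1 ab /andP[x0 x1].
have ax : 0 <= a * x <= 1.
  apply/andP; split; first exact: mulr_ge0.
  by rewrite -(mul1r 1) ler_pM // ltW.
have u01 : 0 <= 1 - a * x <= 1 by case/andP: ax => ? ?; apply/andP; split; lra.
apply: le_trans (bern b u01) _.
rewrite -natr1 in ab *.
have b0 : 0 <= (b%:R : R) by exact: ler0n.
have hx2 : x ^+ 2 <= x by rewrite expr2 ler_piMr.
have : (1 - (b%:R + 1) * a) * x ^+ 2 <= (1 - (b%:R + 1) * a) * x.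
  by apply: ler_wpM2l; lra.
rewrite !expr2; nra.
Qed.

Lemma C_pos (R : realType) (a : R) (b : nat) :
  0 <= a -> a < 1 -> b.+1%:R * a <= 1 -> 0 < (1 - b.+1%:R * a) + a ^+ 2 * b%:R.
Proof.
move=> a0 a1 ab.
  have b0 : 0 <= (b%:R : R) by exact: ler0n.
  have a2 : 0 <= a ^+ 2 * b%:R by apply: mulr_ge0 => //; exact: sqr_ge0.
  case: (ltrP (b.+1%:R * a) 1) => hab; first by lra.
  have e : b.+1%:R * a = 1 by apply/eqP; rewrite eq_le ab hab.
  case: b e ab hab b0 a2 => [|b] e ab hab b0 a2.
    by move: e; rewrite mul1r => e; rewrite e ltxx in a1.
  have ap : 0 < a.
    rewrite lt0r; apply/andP; split => //; apply/eqP => a00.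
    by move: e; rewrite a00 mulr0 => /eqP; rewrite eq_sym oner_eq0.
  rewrite e subrr add0r; apply: mulr_gt0; first exact: exprn_gt0.
  by rewrite ltr0n.
Qed.

Lemma decay (R : realType) (a : R) (b : nat) (x : nat -> R) :
  0 <= a -> a < 1 -> (0 < b)%N -> b%:R * a <= 1 ->
  (forall n, 0 <= x n <= 1) ->
  (forall n, x n.+1 <= 1 - (1 - a * x n) ^+ b) ->
  (x n @[n --> \oo] --> 0)%classic.
Proof.
case: b => // b a0 a1 _ ab hx hrec.
set C := (1 - b.+1%:R * a) + a ^+ 2 * b%:R.
have C0 : 0 < C by exact: C_pos.
have hstep : forall n, x n.+1 <= x n - C * x n ^+ 2.
  move=> n; have := step_ineq a0 a1 ab (hx n); have := hrec n; rewrite -/C; lra.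
have hdec : forall n, x n.+1 <= x n.
  move=> n; apply: le_trans (hstep n) _; rewrite lerBlDr lerDl.
  by apply: mulr_ge0; [exact: ltW | exact: sqr_ge0].
apply/cvgrPdist_lt => e e0.
have claim : forall n, x n < e \/ x n <= 1 - n%:R * (C * e ^+ 2).
  elim=> [|n [IH|IH]].
  - by right; rewrite mul0r subr0; case/andP: (hx 0%N).
  - by left; apply: le_lt_trans (hdec n) IH.
  - case: (ltrP (x n) e) => hxe; first by left; apply: le_lt_trans (hdec n) hxe.
    right; apply: le_trans (hstep n) _.
    have : C * e ^+ 2 <= C * x n ^+ 2.
      apply: ler_wpM2l; first exact: ltW.
      by rewrite lerXn2r // ?nnegrE ?(ltW e0) //; case/andP: (hx n).
    rewrite -natr1; nra.
have Ce : 0 < C * e ^+ 2 by apply: mulr_gt0 => //; exact: exprn_gt0.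
set N := Num.bound (C * e ^+ 2)^-1.
have hN : (C * e ^+ 2)^-1 < N%:R by apply: archi_boundP; rewrite invr_ge0 ltW.
exists N => // n /= hn.
rewrite sub0r normrN ger0_norm; last by case/andP: (hx n).
case: (claim n) => // h.
have : 1 < n%:R * (C * e ^+ 2).
  rewrite -ltr_pdivrMr // div1r; apply: lt_le_trans hN _.
  by rewrite ler_nat.
case/andP: (hx n) => h0 _; lra.
Qed.

Unset Implicit Arguments. Set Strict Implicit.

Lemma DV_bounds (R : realType) (T : finType) (P Q : T -> R) :
  (forall x, 0 <= P x) -> (forall x, 0 <= Q x) ->
  \sum_x P x = 1 -> \sum_x Q x = 1 -> 0 <= DV P Q <= 1.
Proof.
move=> p0 q0 p1 q1; apply/andP; split.
  by apply: mulr_ge0; [rewrite invr_ge0 | apply: sumr_ge0].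
have : \sum_x `|P x - Q x| <= \sum_x (P x + Q x).
  apply: ler_sum => x _; apply: le_trans (ler_normB _ _) _.
  by rewrite !ger0_norm.
rewrite big_split /= p1 q1 /DV; set S := \sum_x _; lra.
Qed.

Lemma mxpow_id (R : realType) (q : nat) (M : 'M[R]_q) k :
  M = 1%:M -> mxpow M k = 1%:M.
Proof. by move=> ->; elim: k => //= k IH; rewrite /mxpow /= -/(mxpow _ k) IH mulmx1. Qed.

Lemma swap_not_ergodic (R : realType) (M : 'M[R]_2) :
  (forall i j, M i j = if i == j then 0 else 1) ->
  ~ (exists k, forall i j, 0 < mxpow M k i j).
Proof.
move=> HM [k Hk].
have MM : forall i j : 'I_2, \sum_(l < 2) M i l * M l j = (i == j)%:R.
  move=> i j; rewrite !big_ord_recr big_ord0 !HM.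
  by case: i => [[|[|?]] ?] //; case: j => [[|[|?]] ?] //=;
     rewrite ?mul0r ?mulr0 ?mul1r ?add0r ?addr0.
have E : forall k i j, mxpow M k i j = if odd k then M i j else (i == j)%:R.
  elim=> [|k' IH] i j; first by rewrite /mxpow /= mxE.
  rewrite /mxpow /= -/(mxpow _ k') mxE /=.
  under eq_bigr => l _ do rewrite IH.
  case: (odd k') => /=; first exact: MM.
  rewrite (eq_bigr (fun l => (i == l)%:R * M l j)) ?sum_delta //.
have := Hk ord0 (Ordinal (isT : (1 < 2)%N)); have := Hk ord0 ord0.
rewrite !E !HM /=; case: (odd k) => /=; by rewrite ltxx.
Qed.

Lemma lam_lt1 (R : realType) (q : nat) (delta : R) (M : 'M[R]_q) :
  (2 <= q)%N ->
  (forall i j : 'I_q, M i j = if i == j then 1 - (q%:R - 1) * delta else delta) ->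
  ergodic_stochastic M -> `|1 - q%:R * delta| < 1.
Proof.
move=> hq HMf [[HM0 HM1] [k Hk]].
have q0 : (0 < q)%N by apply: leq_trans hq.
pose i0 : 'I_q := Ordinal q0. pose i1 : 'I_q := Ordinal hq.
have ne01 : (i0 == i1) = false by [].
have d0 : 0 <= delta by have := HM0 i0 i1; rewrite HMf ne01.
have d1 : 0 <= 1 - (q%:R - 1) * delta by have := HM0 i0 i0; rewrite HMf eqxx.
have q2 : 2 <= (q%:R : R) by rewrite ler_nat.
have dpos : 0 < delta.
  rewrite lt0r d0 andbT; apply/eqP => dz.
  have M1 : M = 1%:M.
    apply/matrixP => i j; rewrite HMf mxE dz mulr0 subr0.
    by case: (i == j).
  by have := Hk i0 i1; rewrite mxpow_id // mxE ne01 ltxx.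
rewrite ltr_norml; apply/andP; split; last first.
  have : 0 < q%:R * delta by apply: mulr_gt0 => //; lra.
  lra.
have hle : q%:R * delta <= 2.
  have : delta <= 1 by nra.
  nra.
case: (ltrP (q%:R * delta) 2) => h2; first lra.
have e2 : q%:R * delta = 2 by apply/eqP; rewrite eq_le hle h2.
have de1 : delta = 1 by nra.
have hq2 : q = 2%N.
  apply/eqP; rewrite eqn_leq hq andbT -(ler_nat R).
  by move: d1; rewrite de1 mulr1; lra.
exfalso; subst q.
apply: (@swap_not_ergodic R M); last by exists k.
move=> i j; rewrite HMf de1; case: (i == j) => //.
lra.
Qed.

Theorem mainTheorem4 (R : realType) (q b : nat) (delta : R) (M : 'M[R]_q) :
  (2 <= q)%N ->
  (forall i j : 'I_q, M i j = if i == j then 1 - (q%:R - 1) * delta else delta) ->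
  ergodic_stochastic M ->
  (0 < b)%N ->
  b%:R * `|1 - q%:R * delta| <= 1 ->
  ~ reconstruction_solvable b M.
Proof.
move=> hq HMf Herg hb hab [i [j Hij]].
have a1 := @lam_lt1 R q delta M hq HMf Herg.
have HMs := Herg.1.
have Hcvg : ((fun n : nat => DV (@Pn R q b M n i) (@Pn R q b M n j)) n @[n --> \oo] --> 0)%classic.
  apply: (decay (a := `|1 - q%:R * delta|) (b := b)) => //.
    move=> n; apply: DV_bounds; try (move=> x; exact: Pn_ge0 HMs.1);
      exact: sum_Pn.
  by move=> n; exact: DV_rec.
have := cvg_lim (@norm_hausdorff _ _) Hcvg.
by move=> E; rewrite E ltxx in Hij.
Qed.
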